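(* There exist a complex number $\gamma\in\mathbb C$ with $\operatorname{Im}(\gamma)<0$ and a complex-valued solution $W:\mathbb R\to\mathbb C$ of the ordinary differential equation \[ \gamma\,(\gamma-z^2)^2\,\frac{d}{dz}W(z)+\frac{d^3}{dz^3}\Big[(\gamma-z^2)W(z)\Big]=0,\qquad z\in\mathbb R, \] such that $\lim_{z\to-\infty}W(z)=0$ and $\lim_{z\to+\infty}W(z)=1$. *)

(* Defs.v *)
From Stdlib Require Export Reals.
From Coquelicot Require Export Coquelicot.
Open Scope R_scope.

Definition weighted (g : C) (W : R -> C) : R -> C :=
  fun z => ((g - RtoC (z ^ 2)) * W z)%C.

Definition solves_ode (g : C) (W : R -> C) : Prop :=
  exists W1 V1 V2 V3 : R -> C,
    forall z : R,
      is_derive W z (W1 z) /\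
      is_derive (weighted g W) z (V1 z) /\
      is_derive V1 z (V2 z) /\
      is_derive V2 z (V3 z) /\
      (g * (g - RtoC (z ^ 2)) ^ 2 * W1 z + V3 z)%C = RtoC 0.

(* Main.v *)
Require Import Defs.
From Stdlib Require Import Lra Lia.
Open Scope R_scope.

Notation CM := (prod_NormedModule R_AbsRing R_NormedModule R_NormedModule).
Notation isdC f x l := (@is_derive R_AbsRing CM f x l).

Lemma dC_intro (f : R -> C) x (a b : R) :
  is_derive (fun t => fst (f t)) x a -> is_derive (fun t => snd (f t)) x b ->
  isdC f x ((a,b) : C).
Proof.
  intros Ha Hb.
  unfold is_derive in *.
  eapply filterdiff_ext.
  2: { eapply (filterdiff_comp_2 (K:=R_AbsRing) (U:=R_NormedModule) (V:=R_NormedModule) (W:=CM)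
          (fun t => fst (f t)) (fun t => snd (f t)) (fun u v => (u,v)) _ _ (fun u v => (u,v)) Ha Hb).
       apply filterdiff_linear. apply is_linear_prod; [apply is_linear_fst | apply is_linear_snd]. }
  intros y. simpl. destruct (f y); reflexivity.
Qed.

Lemma dC_fst (f : R -> C) x l : isdC f x l -> is_derive (fun t => fst (f t)) x (fst l).
Proof.
  intros H. unfold is_derive in *.
  eapply (filterdiff_comp f (fun u : CM => fst u) _ (fun u : CM => fst u) H).
  apply filterdiff_linear. apply (is_linear_fst (U:=R_NormedModule) (V:=R_NormedModule)).
Qed.

Lemma dC_snd (f : R -> C) x l : isdC f x l -> is_derive (fun t => snd (f t)) x (snd l).
Proof.
  intros H. unfold is_derive in *.
  eapply (filterdiff_comp f (fun u : CM => snd u) _ (fun u : CM => snd u) H).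
  apply filterdiff_linear. apply (is_linear_snd (U:=R_NormedModule) (V:=R_NormedModule)).
Qed.

Lemma dC (f : R -> C) x l : is_derive (fun t => fst (f t)) x (fst l) -> is_derive (fun t => snd (f t)) x (snd l) -> isdC f x l.
Proof. intros; destruct l; apply dC_intro; auto. Qed.

Lemma dR_val (f : R -> R) x l l' : is_derive f x l -> l = l' -> is_derive f x l'.
Proof. intros H ->; exact H. Qed.
Lemma dC_val (f : R -> C) x l l' : isdC f x l -> l = l' -> isdC f x l'.
Proof. intros H ->; exact H. Qed.

Lemma dR_const (c : R) x : is_derive (fun _ => c) x 0.
Proof. exact (is_derive_const c x). Qed.
Lemma dR_minus (f g : R -> R) x a b : is_derive f x a -> is_derive g x b -> is_derive (fun t => f t - g t) x (a - b).
Proof. intros. exact (is_derive_minus f g x a b H H0). Qed.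
Lemma dR_plus (f g : R -> R) x a b : is_derive f x a -> is_derive g x b -> is_derive (fun t => f t + g t) x (a + b).
Proof. intros. exact (is_derive_plus f g x a b H H0). Qed.
Lemma dR_mult (f g : R -> R) x a b : is_derive f x a -> is_derive g x b -> is_derive (fun t => f t * g t) x (a * g x + f x * b).
Proof. intros. exact (is_derive_mult f g x a b H H0 Rmult_comm). Qed.
Lemma dR_opp (f : R -> R) x a : is_derive f x a -> is_derive (fun t => - f t) x (- a).
Proof. intros. exact (is_derive_opp f x a H). Qed.

Lemma dC_mult (f g : R -> C) x df dg : isdC f x df -> isdC g x dg ->
  isdC (fun t => (f t * g t)%C) x (df * g x + f x * dg)%C.
Proof.
  intros Hf Hg.
  pose proof (dC_fst _ _ _ Hf) as f1. pose proof (dC_snd _ _ _ Hf) as f2.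
  pose proof (dC_fst _ _ _ Hg) as g1. pose proof (dC_snd _ _ _ Hg) as g2.
  apply dC; simpl.
  - eapply dR_val. eapply dR_minus; eapply dR_mult; eauto.
    simpl. ring.
  - eapply dR_val. eapply dR_plus; eapply dR_mult; eauto.
    simpl. ring.
Qed.

Lemma dC_plus (f g : R -> C) x df dg : isdC f x df -> isdC g x dg ->
  isdC (fun t => (f t + g t)%C) x (df + dg)%C.
Proof.
  intros Hf Hg.
  pose proof (dC_fst _ _ _ Hf) as f1. pose proof (dC_snd _ _ _ Hf) as f2.
  pose proof (dC_fst _ _ _ Hg) as g1. pose proof (dC_snd _ _ _ Hg) as g2.
  apply dC; simpl; eapply dR_plus; eauto.
Qed.

Lemma dC_minus (f g : R -> C) x df dg : isdC f x df -> isdC g x dg ->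
  isdC (fun t => (f t - g t)%C) x (df - dg)%C.
Proof.
  intros Hf Hg.
  pose proof (dC_fst _ _ _ Hf) as f1. pose proof (dC_snd _ _ _ Hf) as f2.
  pose proof (dC_fst _ _ _ Hg) as g1. pose proof (dC_snd _ _ _ Hg) as g2.
  apply dC; simpl; eapply dR_minus; eauto.
Qed.

Lemma dC_const (c : C) x : isdC (fun _ => c) x (RtoC 0).
Proof. apply dC; simpl; apply dR_const. Qed.

Lemma dC_RtoC (h : R -> R) x d : is_derive h x d -> isdC (fun t => RtoC (h t)) x (RtoC d).
Proof. intros H; apply dC; simpl; auto. apply dR_const. Qed.

Lemma dC_inv (f : R -> C) x df : f x <> RtoC 0 -> isdC f x df ->
  isdC (fun t => (/ f t)%C) x (- df / (f x * f x))%C.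
Proof.
  intros Hnz Hf.
  pose proof (dC_fst _ _ _ Hf) as f1. pose proof (dC_snd _ _ _ Hf) as f2.
  assert (Hn : fst (f x) ^ 2 + snd (f x) ^ 2 <> 0).
  { intros H. apply Hnz. destruct (f x) as [a b]; simpl in *.
    assert (a = 0) by nra. assert (b = 0) by nra. subst; reflexivity. }
  assert (Hd : is_derive (fun t => fst (f t) ^ 2 + snd (f t) ^ 2) x
     (2 * fst (f x) * fst df + 2 * snd (f x) * snd df)).
  { eapply dR_val. eapply dR_plus; eapply is_derive_pow; eauto.
    simpl. ring. }
  apply dC.
  - eapply is_derive_ext with (f := fun t => fst (f t) / (fst (f t) ^ 2 + snd (f t) ^ 2)).
    { intros t. reflexivity. }
    eapply dR_val. eapply is_derive_div; eauto.
    destruct df as [p q]; destruct (f x) as [a b]; simpl in *.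
    assert (Hp : 0 < a * (a * 1) + b * (b * 1)) by (destruct (Rle_lt_or_eq_dec 0 (a * (a * 1) + b * (b * 1))); [nra| auto | congruence]).
    assert (Hq : (a * a - b * b) * ((a * a - b * b) * 1) + (a * b + b * a) * ((a * b + b * a) * 1) <> 0) by nra.
    field; split; lra.
  - eapply is_derive_ext with (f := fun t => - snd (f t) / (fst (f t) ^ 2 + snd (f t) ^ 2)).
    { intros t. reflexivity. }
    eapply dR_val. eapply is_derive_div; eauto. eapply dR_opp; eauto.
    destruct df as [p q]; destruct (f x) as [a b]; simpl in *.
    assert (Hp : 0 < a * (a * 1) + b * (b * 1)) by (destruct (Rle_lt_or_eq_dec 0 (a * (a * 1) + b * (b * 1))); [nra| auto | congruence]).
    assert (Hq : (a * a - b * b) * ((a * a - b * b) * 1) + (a * b + b * a) * ((a * b + b * a) * 1) <> 0) by nra.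
    field; split; lra.
Qed.

Lemma scal_C (r : R) (c : C) : @scal R_Ring (NormedModule.ModuleSpace _ CM) r c = (RtoC r * c)%C.
Proof. destruct c as [c1 c2]. apply injective_projections; simpl; [change (scal r c1) with (r * c1) | change (scal r c2) with (r * c2)]; ring. Qed.

Lemma dC_comp (f : R -> C) (h : R -> R) x df dh : isdC f (h x) df -> is_derive h x dh ->
  isdC (fun t => f (h t)) x (RtoC dh * df)%C.
Proof. intros Hf Hh. rewrite <- scal_C. exact (is_derive_comp (K:=R_AbsRing) (V:=CM) f h x df dh Hf Hh). Qed.

Definition s3 := sqrt 3.
Lemma s3_sq : s3 * s3 = 3.
Proof. unfold s3. apply sqrt_sqrt. lra. Qed.
Lemma s3_pos : 0 < s3.
Proof. unfold s3. apply sqrt_lt_R0. lra. Qed.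

Definition bb : C := (-1/2, s3/2).
Definition gg : C := (-1/2, -(s3/2)).
Definition hb : C := (-1/4, s3/4).

Lemma gg_bb : gg = (bb * bb)%C.
Proof. unfold gg, bb. apply injective_projections; simpl; pose proof s3_sq; nra. Qed.
Lemma bb_gg : (bb * gg)%C = RtoC 1.
Proof. unfold gg, bb. apply injective_projections; simpl; pose proof s3_sq; nra. Qed.
Lemma bb_hb : bb = (RtoC 2 * hb)%C.
Proof. unfold hb, bb. apply injective_projections; simpl; lra. Qed.
Lemma Im_gg : Im gg < 0.
Proof. unfold gg, Im; simpl. pose proof s3_pos. lra. Qed.

Definition ce (y : R) : C := (exp (-y/4) * cos (s3 * y / 4), exp (-y/4) * sin (s3 * y / 4)).

Lemma d_ce y : isdC ce y (hb * ce y)%C.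
Proof.
  apply dC; unfold ce, hb; simpl.
  - eapply dR_val. eapply dR_mult.
    + eapply is_derive_comp. apply is_derive_exp. eapply dR_val. auto_derive; auto. reflexivity.
    + eapply is_derive_comp. apply is_derive_cos. eapply dR_val. auto_derive; auto. reflexivity.
    + simpl. unfold scal; simpl; unfold mult; simpl. field.
  - eapply dR_val. eapply dR_mult.
    + eapply is_derive_comp. apply is_derive_exp. eapply dR_val. auto_derive; auto. reflexivity.
    + eapply is_derive_comp. apply is_derive_sin. eapply dR_val. auto_derive; auto. reflexivity.
    + simpl. unfold scal; simpl; unfold mult; simpl. field.
Qed.

Definition E (t : R) : C := ce (t * t).

Lemma d_E t : isdC E t (bb * RtoC t * E t)%C.
Proof.
  unfold E. eapply dC_val. eapply dC_comp. apply d_ce.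
  eapply dR_val. auto_derive; auto. reflexivity.
  rewrite bb_hb. apply injective_projections; simpl; ring.
Qed.

Definition q (z : R) : C := (gg - RtoC (z ^ 2))%C.
Lemma q_nz z : q z <> RtoC 0.
Proof. unfold q, gg. intros H. apply (f_equal snd) in H. simpl in H. pose proof s3_pos. lra. Qed.

Lemma d_q z : isdC q z (- RtoC (2 * z))%C.
Proof.
  unfold q. eapply dC_val. eapply dC_minus. apply dC_const. apply dC_RtoC.
  eapply dR_val. auto_derive; auto. reflexivity.
  apply injective_projections; simpl; ring.
Qed.

Ltac ceq := match goal with |- ?a = ?b => change (@eq C a b) end; cbv beta.

Lemma RtoC_sq z : RtoC (z ^ 2) = (RtoC z * RtoC z)%C.
Proof. apply injective_projections; simpl; ring. Qed.

Lemma RtoC_m2 : RtoC (-2) = (- RtoC 2)%C.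
Proof. apply injective_projections; simpl; ring. Qed.

Lemma q_eq z : q z = (gg - RtoC z * RtoC z)%C.
Proof. unfold q. rewrite RtoC_sq. reflexivity. Qed.

Lemma qnz' z : (gg - RtoC z * RtoC z)%C <> RtoC 0.
Proof. rewrite <- q_eq. apply q_nz. Qed.

Lemma d_id z : isdC (fun t => RtoC t) z (RtoC 1).
Proof. apply dC_RtoC. apply (is_derive_id (K:=R_AbsRing)). Qed.

Section ODE.
Variable Phi : R -> C.
Hypothesis dPhi : forall z, isdC Phi z (E z).
Variables A B : C.

Definition K (z : R) : C := (RtoC z * E z / q z + bb * Phi z)%C.

Lemma d_K z : isdC K z (RtoC 2 * gg * E z / (q z * q z))%C.
Proof.
  unfold K. eapply dC_val.
  eapply dC_plus. eapply dC_mult. eapply dC_mult. apply d_id. apply d_E.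
  eapply dC_inv. apply q_nz. apply d_q.
  eapply dC_mult. apply dC_const. apply dPhi.
  ceq. transitivity (RtoC 2 * gg * E z / (q z * q z) + E z * (bb * gg - RtoC 1) / q z)%C.
  - rewrite !q_eq. pose proof (qnz' z). rewrite RtoC_mult. field. auto.
  - rewrite bb_gg. field. apply q_nz.
Qed.

Definition W (z : R) : C := (A * K z + B)%C.
Definition cc : C := (A * RtoC 2 * gg)%C.
Definition W1 (z : R) : C := (A * (RtoC 2 * gg * E z / (q z * q z)))%C.
Definition V1 (z : R) : C := (RtoC (-2 * z) * W z + cc * E z / q z)%C.
Definition V2 (z : R) : C := (RtoC (-2) * W z + cc * bb * RtoC z * E z / q z)%C.
Definition V3 (z : R) : C := (cc * E z * (- RtoC 2 / (q z * q z) + bb / q z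
   + bb * bb * RtoC z * RtoC z / q z + RtoC 2 * bb * RtoC z * RtoC z / (q z * q z)))%C.

Lemma d_W z : isdC W z (W1 z).
Proof.
  unfold W, W1. eapply dC_val. eapply dC_plus. eapply dC_mult. apply dC_const. apply d_K. apply dC_const.
  ceq. field. apply q_nz.
Qed.

Lemma d_V z : isdC (weighted gg W) z (V1 z).
Proof.
  unfold weighted. eapply dC_val. eapply dC_mult. apply d_q. apply d_W.
  ceq. unfold V1, W1, cc. change (gg - RtoC (z^2))%C with (q z). rewrite ?RtoC_mult, ?RtoC_m2. generalize (W z) (E z) (q z) (q_nz z). intros w e qq Hq. field. auto.
Qed.

Lemma d_V1 z : isdC V1 z (V2 z).
Proof.
  unfold V1. eapply dC_val. eapply dC_plus. eapply dC_mult.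
  apply (dC_RtoC (fun t => -2 * t)). eapply dR_val. auto_derive; auto. reflexivity.
  apply d_W.
  eapply dC_mult. eapply dC_mult. apply dC_const. apply d_E. eapply dC_inv. apply q_nz. apply d_q.
  ceq. unfold V2, W1, cc. rewrite !RtoC_mult. rewrite ?RtoC_mult, ?RtoC_m2. generalize (W z) (E z) (q z) (q_nz z). intros w e qq Hq. field. auto.
Qed.

Lemma d_V2 z : isdC V2 z (V3 z).
Proof.
  unfold V2. eapply dC_val. eapply dC_plus. eapply dC_mult.
  apply dC_const. apply d_W.
  eapply dC_mult. eapply dC_mult. eapply dC_mult. apply dC_const. apply d_id. apply d_E. eapply dC_inv. apply q_nz. apply d_q.
  ceq. unfold V3, W1, cc. rewrite !RtoC_mult. rewrite ?RtoC_mult, ?RtoC_m2. generalize (W z) (E z) (q z) (q_nz z). intros w e qq Hq. field. auto.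
Qed.

Lemma ode_final z : (gg * (gg - RtoC (z ^ 2)) ^ 2 * W1 z + V3 z)%C = RtoC 0.
Proof.
  fold (q z). unfold V3, W1, cc.
  transitivity (A * RtoC 2 * gg * E z * ((gg - bb * bb) + RtoC 2 * (bb * gg - RtoC 1) / (q z * q z) + bb * (bb * gg - RtoC 1) / q z))%C.
  - rewrite !q_eq. pose proof (qnz' z). field. auto.
  - rewrite bb_gg, <- gg_bb. pose proof (q_nz z). field. auto.
Qed.

Lemma solves : solves_ode gg W.
Proof.
  exists W1, V1, V2, V3. intros z. split; [apply d_W|]. split; [apply d_V|].
  split; [apply d_V1|]. split; [apply d_V2|]. apply ode_final.
Qed.
End ODE.

Lemma cont_E t : @continuous R_UniformSpace (NormedModule.UniformSpace _ CM) E t.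
Proof. apply (ex_derive_continuous (K:=R_AbsRing) (V:=CM)). eexists. apply d_E. Qed.

Lemma exRInt_E a b : ex_RInt E a b.
Proof. apply (ex_RInt_continuous (V:=C_R_CompleteNormedModule)). intros; apply cont_E. Qed.

Definition Phi (z : R) : C := @RInt C_R_CompleteNormedModule E 0 z.

Lemma dPhi z : isdC Phi z (E z).
Proof.
  apply (is_derive_RInt (V:=C_R_NormedModule) E Phi 0 z).
  - apply filter_forall. intros x. unfold Phi. apply (RInt_correct (V:=C_R_CompleteNormedModule)). apply exRInt_E.
  - apply cont_E.
Qed.

Lemma normCM (c : C) : @norm R_AbsRing CM c = Cmod c.
Proof.
  destruct c as [a b]. unfold Cmod. change (@norm R_AbsRing CM (a,b)) with (sqrt (Rabs a ^ 2 + Rabs b ^ 2)).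
  rewrite !pow2_abs. reflexivity.
Qed.

Lemma Cmod_E t : Cmod (E t) = exp (- (t * t) / 4).
Proof.
  unfold E, ce, Cmod. cbn [fst snd].
  replace ((exp (- (t * t) / 4) * cos (s3 * (t * t) / 4)) ^ 2 + (exp (- (t * t) / 4) * sin (s3 * (t * t) / 4)) ^ 2)
    with ((exp (- (t * t) / 4)) ^ 2).
  - apply sqrt_pow2. apply Rlt_le, exp_pos.
  - pose proof (sin2_cos2 (s3 * (t * t) / 4)). unfold Rsqr in H. simpl. nra.
Qed.

Ltac req := match goal with |- ?a = ?b => change (@eq R a b) end.

Lemma exp_le_inv y : 0 < y -> exp (- y) < / y.
Proof.
  intros Hy. rewrite exp_Ropp. pose proof (exp_pos y). apply Rinv_lt_contravar. nra.
  pose proof (exp_ineq1_le y). lra.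
Qed.

Lemma gauss_small u : 0 < u -> exp (- (u * u) / 4) < 4 / (u * u).
Proof.
  intros Hu. replace (- (u * u) / 4) with (- (u * u / 4)) by field.
  eapply Rlt_le_trans. apply exp_le_inv. nra. right. field. lra.
Qed.

Lemma Phi_diff u v : (Phi v - Phi u)%C = @RInt C_R_CompleteNormedModule E u v.
Proof.
  unfold Phi. rewrite <- (RInt_Chasles (V:=C_R_CompleteNormedModule) E 0 u v); try apply exRInt_E.
  generalize (@RInt C_R_CompleteNormedModule E 0 u) (@RInt C_R_CompleteNormedModule E u v).
  intros [a1 a2] [b1 b2]. apply injective_projections; simpl; unfold plus; simpl; ring.
Qed.

Lemma tail_bound u v : 1 <= u <= v -> Cmod (Phi v - Phi u)%C <= 2 * exp (- (u * u) / 4).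
Proof.
  intros Huv. rewrite Phi_diff. rewrite <- normCM.
  assert (Hg : is_RInt (fun t => t * exp (- (t * t) / 4)) u v
               (minus (-2 * exp (- (v * v) / 4)) (-2 * exp (- (u * u) / 4)))).
  { apply (is_RInt_derive (fun t => -2 * exp (- (t * t) / 4))).
    - intros x _. eapply dR_val. auto_derive; auto. req. unfold Rdiv. field.
    - intros x _. apply (ex_derive_continuous (K:=R_AbsRing) (V:=R_NormedModule)). auto_derive; auto. }
  eapply Rle_trans.
  apply (norm_RInt_le (V:=CM) E (fun t => t * exp (- (t * t) / 4)) u v _ _ (proj2 Huv)).
  - intros x Hx. rewrite normCM, Cmod_E. pose proof (exp_pos (- (x * x) / 4)). nra.
  - apply (RInt_correct (V:=C_R_CompleteNormedModule)). apply exRInt_E.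
  - exact Hg.
  - unfold minus, plus, opp; simpl. pose proof (exp_pos (- (v * v) / 4)). lra.
Qed.

Lemma big_M (eps : R) : 0 < eps -> exists M, 1 <= M /\ forall u, M <= u -> 8 / (u * u) < eps.
Proof.
  intros He. exists (1 + 8 / eps). split.
  - assert (0 < 8 / eps) by (apply Rdiv_lt_0_compat; lra). lra.
  - intros u Hu. assert (0 < 8 / eps) by (apply Rdiv_lt_0_compat; lra).
    assert (Hu1 : 1 <= u) by lra.
    assert (eps * u > 8).
    { assert (eps * (1 + 8 / eps) = eps + 8) by (field; lra). nra. }
    apply Rmult_lt_reg_r with (u * u). nra.
    unfold Rdiv. rewrite Rmult_assoc, Rinv_l by nra. nra.
Qed.

Lemma ball_C (x y : C) (eps : R) : Cmod (y - x)%C < eps -> @ball C_UniformSpace x eps y.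
Proof.
  intros H. apply (norm_compat1 (V:=CM)). rewrite normCM. exact H.
Qed.

Lemma Phi_lim : exists L : C, filterlim Phi (Rbar_locally p_infty) (@locally C_UniformSpace L).
Proof.
  apply (filterlim_locally_cauchy (U:=C_R_CompleteNormedModule) (F:=Rbar_locally p_infty)).
  intros eps. destruct (big_M eps (cond_pos eps)) as [M [HM1 HM]].
  exists (fun x => M < x). split.
  - exists M. auto.
  - assert (Hb : forall u v, M < u -> u <= v -> Cmod (Phi v - Phi u)%C < eps).
    { intros u v Hu Huv. eapply Rle_lt_trans. apply tail_bound. lra.
      eapply Rle_lt_trans. 2: apply (HM u); lra.
      pose proof (gauss_small u ltac:(lra)). lra. }
    intros u v Hu Hv. destruct (Rle_lt_dec u v).
    + apply ball_C. apply Hb; auto.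
    + apply ball_sym. apply ball_C. apply Hb; auto; lra.
Qed.

Definition Y (x t : R) := x * x * (1 + t * t).
Definition G1 (x t : R) := exp (- Y x t / 4) * cos (s3 * Y x t / 4) / (1 + t * t).
Definition G2 (x t : R) := exp (- Y x t / 4) * sin (s3 * Y x t / 4) / (1 + t * t).
Definition D1 (x t : R) := 2 * x * (- (1/4) * exp (- Y x t / 4) * cos (s3 * Y x t / 4) - s3 / 4 * exp (- Y x t / 4) * sin (s3 * Y x t / 4)).
Definition D2 (x t : R) := 2 * x * (- (1/4) * exp (- Y x t / 4) * sin (s3 * Y x t / 4) + s3 / 4 * exp (- Y x t / 4) * cos (s3 * Y x t / 4)).

Lemma t2_pos t : 0 < 1 + t * t.
Proof. nra. Qed.

Lemma dG1 x t : is_derive (fun u => G1 u t) x (D1 x t).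
Proof.
  unfold G1, D1, Y. pose proof (t2_pos t). eapply dR_val. auto_derive; try lra; try reflexivity.
  req. unfold Rdiv. field. lra.
Qed.
Lemma dG2 x t : is_derive (fun u => G2 u t) x (D2 x t).
Proof.
  unfold G2, D2, Y. pose proof (t2_pos t). eapply dR_val. auto_derive; try lra; try reflexivity.
  req. unfold Rdiv. field. lra.
Qed.

Lemma cpt_exp x : continuity_pt exp x.
Proof. apply derivable_continuous_pt, derivable_pt_exp. Qed.
Lemma cpt_cos x : continuity_pt cos x.
Proof. apply derivable_continuous_pt, derivable_pt_cos. Qed.
Lemma cpt_sin x : continuity_pt sin x.
Proof. apply derivable_continuous_pt, derivable_pt_sin. Qed.

Ltac c2d := unfold Rdiv; repeat first
  [ apply continuity_2d_pt_mult | apply continuity_2d_pt_plus | apply continuity_2d_pt_minus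
  | apply continuity_2d_pt_opp | apply continuity_2d_pt_id1 | apply continuity_2d_pt_id2
  | apply continuity_2d_pt_const
  | apply (continuity_1d_2d_pt_comp exp); [apply cpt_exp|]
  | apply (continuity_1d_2d_pt_comp cos); [apply cpt_cos|]
  | apply (continuity_1d_2d_pt_comp sin); [apply cpt_sin|] ].

Lemma cD1 x t : continuity_2d_pt D1 x t.
Proof. unfold D1, Y. c2d. Qed.
Lemma cD2 x t : continuity_2d_pt D2 x t.
Proof. unfold D2, Y. c2d. Qed.

Lemma exR_G1 x : ex_RInt (G1 x) 0 1.
Proof.
  apply (ex_RInt_continuous (V:=R_CompleteNormedModule)). intros z _.
  apply (ex_derive_continuous (K:=R_AbsRing) (V:=R_NormedModule)). unfold G1, Y.
  pose proof (t2_pos z). auto_derive. lra.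
Qed.
Lemma exR_G2 x : ex_RInt (G2 x) 0 1.
Proof.
  apply (ex_RInt_continuous (V:=R_CompleteNormedModule)). intros z _.
  apply (ex_derive_continuous (K:=R_AbsRing) (V:=R_NormedModule)). unfold G2, Y.
  pose proof (t2_pos z). auto_derive. lra.
Qed.

Lemma dRG1 x : is_derive (fun u => RInt (G1 u) 0 1) x (RInt (D1 x) 0 1).
Proof.
  eapply dR_val.
  apply (is_derive_RInt_param G1 0 1 x).
  - apply filter_forall. intros y t _. eexists. apply dG1.
  - intros t _. apply continuity_2d_pt_ext with D1. intros u v. symmetry. apply is_derive_unique. apply dG1.
    apply cD1.
  - apply filter_forall. intros y. apply exR_G1.
  - apply RInt_ext. intros t _. apply is_derive_unique. apply dG1.
Qed.
Lemma dRG2 x : is_derive (fun u => RInt (G2 u) 0 1) x (RInt (D2 x) 0 1).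
Proof.
  eapply dR_val.
  apply (is_derive_RInt_param G2 0 1 x).
  - apply filter_forall. intros y t _. eexists. apply dG2.
  - intros t _. apply continuity_2d_pt_ext with D2. intros u v. symmetry. apply is_derive_unique. apply dG2.
    apply cD2.
  - apply filter_forall. intros y. apply exR_G2.
  - apply RInt_ext. intros t _. apply is_derive_unique. apply dG2.
Qed.

Definition gC (x : R) : C := (RInt (G1 x) 0 1, RInt (G2 x) 0 1).

Lemma dgC x : isdC gC x ((RInt (D1 x) 0 1, RInt (D2 x) 0 1) : C).
Proof. apply dC_intro. apply dRG1. apply dRG2. Qed.

Lemma ce_plus a b : ce (a + b) = (ce a * ce b)%C.
Proof.
  unfold ce. apply injective_projections; simpl.
  - replace (- (a + b) / 4) with (- a / 4 + - b / 4) by field. rewrite exp_plus.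
    replace (s3 * (a + b) / 4) with (s3 * a / 4 + s3 * b / 4) by field. rewrite cos_plus. ring.
  - replace (- (a + b) / 4) with (- a / 4 + - b / 4) by field. rewrite exp_plus.
    replace (s3 * (a + b) / 4) with (s3 * a / 4 + s3 * b / 4) by field. rewrite sin_plus. ring.
Qed.

Lemma D_eq x t : ((D1 x t, D2 x t) : C) = (bb * E x * (RtoC x * E (x * t)))%C.
Proof.
  transitivity (RtoC x * bb * ce (Y x t))%C.
  - unfold D1, D2, bb, ce. apply injective_projections; simpl; field.
  - unfold Y, E. replace (x * x * (1 + t * t)) with (x * x + x * t * (x * t)) by ring.
    rewrite ce_plus. ceq. ring.
Qed.

Lemma isRInt_Cmul (f : R -> C) a b (l : C) (c : C) :
  is_RInt (V:=CM) f a b l -> is_RInt (V:=CM) (fun t => (c * f t)%C) a b (c * l)%C.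
Proof.
  intros H.
  pose proof (is_RInt_fct_extend_fst (U:=R_NormedModule) (V:=R_NormedModule) f a b l H) as H1.
  pose proof (is_RInt_fct_extend_snd (U:=R_NormedModule) (V:=R_NormedModule) f a b l H) as H2.
  apply (is_RInt_fct_extend_pair (U:=R_NormedModule) (V:=R_NormedModule) (fun t => (c * f t)%C)).
  - simpl. apply (is_RInt_minus (V:=R_NormedModule) (fun t => fst c * fst (f t)) (fun t => snd c * snd (f t))).
    + apply (is_RInt_scal (V:=R_NormedModule) (fun t => fst (f t))). exact H1.
    + apply (is_RInt_scal (V:=R_NormedModule) (fun t => snd (f t))). exact H2.
  - simpl. apply (is_RInt_plus (V:=R_NormedModule) (fun t => fst c * snd (f t)) (fun t => snd c * fst (f t))).
    + apply (is_RInt_scal (V:=R_NormedModule) (fun t => snd (f t))). exact H2.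
    + apply (is_RInt_scal (V:=R_NormedModule) (fun t => fst (f t))). exact H1.
Qed.

Lemma exR_D1 x : ex_RInt (D1 x) 0 1.
Proof.
  apply (ex_RInt_continuous (V:=R_CompleteNormedModule)). intros z _.
  apply (ex_derive_continuous (K:=R_AbsRing) (V:=R_NormedModule)). unfold D1, Y. auto_derive. auto.
Qed.
Lemma exR_D2 x : ex_RInt (D2 x) 0 1.
Proof.
  apply (ex_RInt_continuous (V:=R_CompleteNormedModule)). intros z _.
  apply (ex_derive_continuous (K:=R_AbsRing) (V:=R_NormedModule)). unfold D2, Y. auto_derive. auto.
Qed.

Lemma Phi_correct a : is_RInt (V:=CM) E 0 a (Phi a).
Proof. unfold Phi. apply (RInt_correct (V:=C_R_CompleteNormedModule)). apply exRInt_E. Qed.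

Lemma gprime x : ((RInt (D1 x) 0 1, RInt (D2 x) 0 1) : C) = (bb * E x * Phi x)%C.
Proof.
  assert (H1 : is_RInt (V:=CM) (fun t => ((D1 x t, D2 x t) : C)) 0 1 ((RInt (D1 x) 0 1, RInt (D2 x) 0 1) : C)).
  { apply (is_RInt_fct_extend_pair (U:=R_NormedModule) (V:=R_NormedModule)); simpl.
    apply (RInt_correct (V:=R_CompleteNormedModule)). apply exR_D1.
    apply (RInt_correct (V:=R_CompleteNormedModule)). apply exR_D2. }
  assert (H0 : is_RInt (V:=CM) (fun t => (RtoC x * E (x * t))%C) 0 1 (Phi x)).
  { eapply (is_RInt_ext (V:=CM)). 2: apply (is_RInt_comp_lin (V:=CM) E x 0 0 1).
    - intros y _. simpl. rewrite Rplus_0_r. apply scal_C.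
    - replace (x * 0 + 0) with 0 by ring. replace (x * 1 + 0) with x by ring. apply Phi_correct. }
  apply (isRInt_Cmul _ _ _ _ (bb * E x)%C) in H0.
  eapply (is_RInt_ext (V:=CM)) in H1. 2: { intros t _. apply D_eq. }
  apply (is_RInt_unique (V:=C_R_CompleteNormedModule)) in H0.
  apply (is_RInt_unique (V:=C_R_CompleteNormedModule)) in H1.
  rewrite <- H1, <- H0. reflexivity.
Qed.

Lemma bb_nz : bb <> RtoC 0.
Proof. unfold bb. intros H. apply (f_equal fst) in H. simpl in H. lra. Qed.

Definition hF (x : R) : C := (Phi x * Phi x - RtoC 2 / bb * gC x)%C.

Lemma dhF x : isdC hF x (RtoC 0).
Proof.
  unfold hF. eapply dC_val. eapply dC_minus. eapply dC_mult; apply dPhi.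
  eapply dC_mult. apply dC_const. apply dgC.
  rewrite gprime. ceq. pose proof bb_nz. field. auto.
Qed.

Lemma Phi0 : Phi 0 = RtoC 0.
Proof. unfold Phi. apply (RInt_point (V:=C_R_CompleteNormedModule)). Qed.

Lemma hF_const x : hF x = hF 0.
Proof.
  assert (H := is_RInt_derive (V:=C_R_CompleteNormedModule) hF (fun _ => RtoC 0) 0 x
     (fun y _ => dhF y) (fun y _ => continuous_const _ _)).
  assert (H2 := is_RInt_const (V:=C_R_CompleteNormedModule) 0 x (RtoC 0)).
  apply (is_RInt_unique (V:=C_R_CompleteNormedModule)) in H.
  apply (is_RInt_unique (V:=C_R_CompleteNormedModule)) in H2.
  rewrite H in H2. 
  revert H2. generalize (hF x) (hF 0). intros [a1 a2] [b1 b2] Hc.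
  unfold minus, plus, opp, scal in Hc; simpl in Hc. unfold prod_plus, prod_opp, prod_scal in Hc. simpl in Hc.
  injection Hc; intros E2 E1. change (a1 + - b1 = (x - 0) * 0) in E1. change (a2 + - b2 = (x - 0) * 0) in E2. f_equal; nra.
Qed.

Lemma Phi_sq x : (Phi x * Phi x)%C = (RtoC 2 / bb * (gC x - gC 0))%C.
Proof.
  pose proof (hF_const x) as H. unfold hF in H. rewrite Phi0 in H.
  pose proof bb_nz. 
  revert H. generalize (Phi x) (gC x) (gC 0). intros p a b H. ceq.
  apply (f_equal (fun w => w + RtoC 2 / bb * a)%C) in H.
  transitivity (p * p - RtoC 2 / bb * a + RtoC 2 / bb * a)%C. field. auto.
  rewrite H. field. auto.
Qed.

Lemma sqrt2_lt2 : sqrt 2 < 2.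
Proof.
  rewrite <- (sqrt_pow2 2) at 2 by lra. apply sqrt_lt_1; simpl; lra.
Qed.

Lemma ball_C_inv (x y : C) (eps : R) : @ball C_UniformSpace x eps y -> Cmod (y - x)%C < 2 * eps.
Proof.
  intros H. destruct H as [H1 H2].
  change (Rabs (fst y - fst x) < eps) in H1. change (Rabs (snd y - snd x) < eps) in H2.
  eapply Rle_lt_trans. apply Cmod_2Rmax. simpl.
  assert (0 < eps) by (pose proof (Rabs_pos (fst y - fst x)); lra).
  assert (Rmax (Rabs (fst y + - fst x)) (Rabs (snd y + - snd x)) < eps) by (apply Rmax_lub_lt; auto).
  pose proof sqrt2_lt2. pose proof Rlt_sqrt2_0.
  pose proof (Rmax_l (Rabs (fst y + - fst x)) (Rabs (snd y + - snd x))). pose proof (Rabs_pos (fst y + - fst x)).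
  nra.
Qed.

Lemma lim_pinf (f : R -> C) l :
  (forall eps, 0 < eps -> exists M, forall z, M < z -> Cmod (f z - l)%C < eps) ->
  filterlim f (Rbar_locally p_infty) (@locally C_UniformSpace l).
Proof.
  intros H. apply filterlim_locally. intros eps. destruct (H eps (cond_pos eps)) as [M HM].
  exists M. intros z Hz. apply ball_C. auto.
Qed.

Lemma lim_minf (f : R -> C) l :
  (forall eps, 0 < eps -> exists M, forall z, z < M -> Cmod (f z - l)%C < eps) ->
  filterlim f (Rbar_locally m_infty) (@locally C_UniformSpace l).
Proof.
  intros H. apply filterlim_locally. intros eps. destruct (H eps (cond_pos eps)) as [M HM].
  exists M. intros z Hz. apply ball_C. auto.
Qed.

Lemma lim_pinf_inv (f : R -> C) l :
  filterlim f (Rbar_locally p_infty) (@locally C_UniformSpace l) ->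
  (forall eps, 0 < eps -> exists M, forall z, M < z -> Cmod (f z - l)%C < eps).
Proof.
  intros H eps He. apply filterlim_locally with (eps := mkposreal (eps/2) ltac:(lra)) in H.
  destruct H as [M HM]. exists M. intros z Hz. specialize (HM z Hz).
  apply ball_C_inv in HM. simpl in HM. lra.
Qed.

Lemma G1_bound x t : 0 <= t <= 1 -> Rabs (G1 x t) <= exp (- (x * x) / 4).
Proof.
  intros Ht. unfold G1. pose proof (t2_pos t).
  rewrite Rabs_div by lra. rewrite Rabs_mult. rewrite (Rabs_right (1 + t * t)) by lra.
  rewrite (Rabs_right (exp _)) by (apply Rle_ge, Rlt_le, exp_pos).
  pose proof (COS_bound (s3 * Y x t / 4)). 
  assert (Rabs (cos (s3 * Y x t / 4)) <= 1) by (apply Rabs_le; lra).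
  assert (exp (- Y x t / 4) <= exp (- (x * x) / 4)).
  { assert (HY : - Y x t / 4 <= - (x * x) / 4) by (unfold Y; nra).
    destruct HY as [HY|HY]. left. apply exp_increasing. exact HY. rewrite HY; lra. }
  apply Rmult_le_reg_r with (1 + t * t). lra.
  unfold Rdiv. rewrite Rmult_assoc, Rinv_l, Rmult_1_r by lra.
  pose proof (exp_pos (- Y x t / 4)). pose proof (Rabs_pos (cos (s3 * Y x t / 4))). nra.
Qed.

Lemma G2_bound x t : 0 <= t <= 1 -> Rabs (G2 x t) <= exp (- (x * x) / 4).
Proof.
  intros Ht. unfold G2. pose proof (t2_pos t).
  rewrite Rabs_div by lra. rewrite Rabs_mult. rewrite (Rabs_right (1 + t * t)) by lra.
  rewrite (Rabs_right (exp _)) by (apply Rle_ge, Rlt_le, exp_pos).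
  pose proof (SIN_bound (s3 * Y x t / 4)). 
  assert (Rabs (sin (s3 * Y x t / 4)) <= 1) by (apply Rabs_le; lra).
  assert (exp (- Y x t / 4) <= exp (- (x * x) / 4)).
  { assert (HY : - Y x t / 4 <= - (x * x) / 4) by (unfold Y; nra).
    destruct HY as [HY|HY]. left. apply exp_increasing. exact HY. rewrite HY; lra. }
  apply Rmult_le_reg_r with (1 + t * t). lra.
  unfold Rdiv. rewrite Rmult_assoc, Rinv_l, Rmult_1_r by lra.
  pose proof (exp_pos (- Y x t / 4)). pose proof (Rabs_pos (sin (s3 * Y x t / 4))). nra.
Qed.

Lemma gC_bound x : Cmod (gC x) <= 2 * exp (- (x * x) / 4).
Proof.
  eapply Rle_trans. apply Cmod_2Rmax. simpl.
  assert (H1 : Rabs (RInt (G1 x) 0 1) <= (1 - 0) * exp (- (x * x) / 4)).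
  { apply abs_RInt_le_const. lra. apply exR_G1. apply G1_bound. }
  assert (H2 : Rabs (RInt (G2 x) 0 1) <= (1 - 0) * exp (- (x * x) / 4)).
  { apply abs_RInt_le_const. lra. apply exR_G2. apply G2_bound. }
  assert (Rmax (Rabs (RInt (G1 x) 0 1)) (Rabs (RInt (G2 x) 0 1)) <= exp (- (x * x) / 4)).
  { apply Rmax_lub; lra. }
  pose proof sqrt2_lt2. pose proof Rlt_sqrt2_0. pose proof (exp_pos (- (x * x) / 4)).
  pose proof (Rmax_l (Rabs (RInt (G1 x) 0 1)) (Rabs (RInt (G2 x) 0 1))). pose proof (Rabs_pos (RInt (G1 x) 0 1)).
  nra.
Qed.

Lemma gC0_pos : 1 / 2 <= fst (gC 0).
Proof.
  simpl. replace (1 / 2) with (RInt (fun _ => 1 / 2) 0 1).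
  - apply RInt_le. lra. apply (ex_RInt_const (V:=R_NormedModule)). apply exR_G1.
    intros t Ht. unfold G1, Y. replace (- (0 * 0 * (1 + t * t)) / 4) with 0 by field.
    replace (s3 * (0 * 0 * (1 + t * t)) / 4) with 0 by field. rewrite exp_0, cos_0.
    apply Rmult_le_reg_r with (2 * (1 + t * t)). nra. field_simplify; nra.
  - rewrite (RInt_const (V:=R_CompleteNormedModule)). unfold scal; simpl; unfold mult; simpl. field.
Qed.

Lemma Cmod_hb : Cmod hb = 1 / 2.
Proof.
  unfold Cmod, hb; simpl. replace ((-1/4) * ((-1/4) * 1) + s3 / 4 * (s3 / 4 * 1)) with ((1/2) ^ 2).
  apply sqrt_pow2; lra. pose proof s3_sq. simpl. nra.
Qed.

Lemma Cmod_bb : Cmod bb = 1.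
Proof.
  unfold Cmod, bb; simpl. replace ((-1/2) * ((-1/2) * 1) + s3 / 2 * (s3 / 2 * 1)) with (1 ^ 2).
  apply sqrt_pow2; lra. pose proof s3_sq. simpl. nra.
Qed.

Lemma bb2_hb : (bb / RtoC 2)%C = hb.
Proof. rewrite bb_hb. ceq. field; try (intros H; apply (f_equal fst) in H; simpl in H; lra). Qed.

Lemma Cmod_sub0 (c : C) : Cmod (c - RtoC 0)%C = Cmod c.
Proof. f_equal. ceq. ring. Qed.

Lemma L_nz L : filterlim Phi (Rbar_locally p_infty) (@locally C_UniformSpace L) -> L <> RtoC 0.
Proof.
  intros HL HL0. subst L.
  pose proof gC0_pos as Hg0. pose proof (re_le_Cmod (gC 0)) as Hre. unfold Re in Hre.
  assert (Hc0 : 1 / 2 <= Cmod (gC 0)).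
  { eapply Rle_trans. 2: exact Hre. rewrite Rabs_right; lra. }
  destruct (lim_pinf_inv _ _ HL (1/2) ltac:(lra)) as [M1 HM1].
  destruct (big_M (1/4) ltac:(lra)) as [M2 [HM2a HM2]].
  set (z := Rmax (M1 + 1) (M2 + 1)).
  assert (Hz1 : M1 < z) by (unfold z; pose proof (Rmax_l (M1+1) (M2+1)); lra).
  assert (Hz2 : M2 <= z) by (unfold z; pose proof (Rmax_r (M1+1) (M2+1)); lra).
  specialize (HM1 z Hz1). rewrite Cmod_sub0 in HM1.
  specialize (HM2 z Hz2).
  pose proof (gC_bound z) as Hgz. pose proof (gauss_small z ltac:(lra)) as Hgs.
  assert (Hid : gC 0 = (gC z - hb * (Phi z * Phi z))%C).
  { rewrite Phi_sq. rewrite <- bb2_hb. pose proof bb_nz. ceq. field.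
    all: try split; auto; try (intros H'; apply (f_equal fst) in H'; simpl in H'; lra). }
  rewrite Hid in Hc0.
  assert (Cmod (gC z - hb * (Phi z * Phi z))%C <= Cmod (gC z) + Cmod hb * (Cmod (Phi z) * Cmod (Phi z))).
  { unfold Cminus. eapply Rle_trans. apply Cmod_triangle. rewrite Cmod_opp, !Cmod_mult. lra. }
  rewrite Cmod_hb in H. pose proof (Cmod_ge_0 (Phi z)). nra.
Qed.

Lemma E_even z : E (- z) = E z.
Proof. unfold E. f_equal. ring. Qed.
Lemma q_even z : q (- z) = q z.
Proof. unfold q. f_equal. f_equal. ring. Qed.

Lemma Phi_odd z : Phi (- z) = (- Phi z)%C.
Proof.
  assert (H1 : is_RInt (V:=CM) (fun y => opp (E (- y))) 0 z (Phi (- z))).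
  { apply (is_RInt_comp_opp (V:=CM)). replace (- 0) with 0 by ring. apply Phi_correct. }
  assert (H2 : is_RInt (V:=CM) (fun y => opp (E y)) 0 z (opp (Phi z))).
  { apply (is_RInt_opp (V:=CM)). apply Phi_correct. }
  eapply (is_RInt_ext (V:=CM)) in H1. 2: { intros y _. rewrite E_even. reflexivity. }
  apply (is_RInt_unique (V:=C_R_CompleteNormedModule)) in H1.
  apply (is_RInt_unique (V:=C_R_CompleteNormedModule)) in H2.
  rewrite <- H1, H2. reflexivity.
Qed.

Lemma K_odd z : K Phi (- z) = (- K Phi z)%C.
Proof.
  unfold K. rewrite E_even, q_even, Phi_odd. rewrite RtoC_opp. pose proof (q_nz z). ceq. field. auto.
Qed.

Lemma Cmod_q z : s3 / 2 <= Cmod (q z).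
Proof.
  eapply Rle_trans. 2: apply Rmax_Cmod. eapply Rle_trans. 2: apply Rmax_r.
  unfold q, gg; simpl. pose proof s3_pos. rewrite Rabs_left; lra.
Qed.

Lemma small_tail c eps : 0 <= c -> 0 < eps -> exists M, 1 <= M /\ forall z, M < z -> c * (z * exp (- (z * z) / 4)) < eps.
Proof.
  intros Hc He. exists (1 + 4 * c / eps). split.
  - assert (0 <= 4 * c / eps) by (apply Rmult_le_pos; [lra | apply Rlt_le, Rinv_0_lt_compat; lra]). lra.
  - intros z Hz. assert (H0 : 0 <= 4 * c / eps) by (apply Rmult_le_pos; [lra | apply Rlt_le, Rinv_0_lt_compat; lra]).
    assert (Hz0 : 0 < z) by lra.
    pose proof (gauss_small z Hz0) as Hg.
    assert (Hze : z * exp (- (z * z) / 4) <= 4 / z).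
    { replace (4 / z) with (z * (4 / (z * z))) by (field; lra). apply Rmult_le_compat_l; lra. }
    assert (H4 : c * (4 / z) < eps).
    { apply Rmult_lt_reg_r with z. lra. replace (c * (4 / z) * z) with (4 * c) by (field; lra).
      assert (eps * (4 * c / eps) = 4 * c) by (field; lra). nra. }
    pose proof (exp_pos (- (z * z) / 4)). nra.
Qed.

Section Final.
Variable L : C.
Hypothesis HL : filterlim Phi (Rbar_locally p_infty) (@locally C_UniformSpace L).
Definition AA : C := (/ (RtoC 2 * bb * L))%C.
Definition BB : C := RtoC (1 / 2).
Definition WW := W Phi AA BB.

Lemma two_nz : RtoC 2 <> RtoC 0.
Proof. intros H. apply (f_equal fst) in H. simpl in H. lra. Qed.

Lemma half_C : RtoC (1 / 2) = (/ RtoC 2)%C.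
Proof. apply injective_projections; simpl; field. Qed.

Lemma WW_minus1 z : (WW z - RtoC 1)%C = (AA * (RtoC z * E z / q z) + AA * bb * (Phi z - L))%C.
Proof.
  unfold WW, W, K, AA, BB. pose proof (q_nz z). pose proof (L_nz L HL). pose proof bb_nz. pose proof two_nz.
  rewrite half_C. ceq. field. auto.
Qed.

Lemma Cmod_zEq z : 0 < z -> Cmod (RtoC z * E z / q z)%C <= (2 / s3) * (z * exp (- (z * z) / 4)).
Proof.
  intros Hz. unfold Cdiv. rewrite !Cmod_mult, Cmod_inv by apply q_nz. rewrite Cmod_R, Cmod_E.
  rewrite Rabs_right by lra. pose proof (Cmod_q z). pose proof s3_pos. pose proof (exp_pos (- (z * z) / 4)).
  assert (/ Cmod (q z) <= 2 / s3).
  { replace (2 / s3) with (/ (s3 / 2)) by (field; lra). apply Rinv_le_contravar; lra. }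
  assert (0 <= z * exp (- (z * z) / 4)) by nra. nra.
Qed.

Lemma WW_pinf_bound eps : 0 < eps -> exists M, forall z, M < z -> Cmod (WW z - RtoC 1)%C < eps.
Proof.
  intros He. set (a := Cmod AA). assert (Ha : 0 <= a) by apply Cmod_ge_0.
  destruct (lim_pinf_inv _ _ HL (eps / (2 * (a + 1)))) as [M1 HM1].
  { apply Rdiv_lt_0_compat; lra. }
  destruct (small_tail (a * (2 / s3)) (eps / 2)) as [M2 [HM2a HM2]].
  { pose proof s3_pos. apply Rmult_le_pos; auto. apply Rlt_le, Rdiv_lt_0_compat; lra. } lra.
  exists (Rmax M1 M2). intros z Hz.
  assert (Hz1 : M1 < z) by (eapply Rle_lt_trans; [apply Rmax_l | exact Hz]).
  assert (Hz2 : M2 < z) by (eapply Rle_lt_trans; [apply Rmax_r | exact Hz]).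
  specialize (HM1 z Hz1). specialize (HM2 z Hz2).
  rewrite WW_minus1. eapply Rle_lt_trans. apply Cmod_triangle.
  rewrite !Cmod_mult, Cmod_bb. fold a.
  pose proof (Cmod_zEq z ltac:(lra)) as Hq.
  assert (H1 : a * Cmod (RtoC z * E z / q z)%C <= a * (2 / s3) * (z * exp (- (z * z) / 4))).
  { rewrite Rmult_assoc. apply Rmult_le_compat_l; auto. }
  assert (H2 : a * 1 * Cmod (Phi z - L)%C <= a * (eps / (2 * (a + 1)))).
  { rewrite Rmult_1_r. apply Rmult_le_compat_l; auto. lra. }
  assert (H3 : a * (eps / (2 * (a + 1))) < eps / 2).
  { unfold Rdiv. rewrite Rinv_mult. 
    assert (0 < / (a + 1)) by (apply Rinv_0_lt_compat; lra).
    assert (a * / (a + 1) < 1).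
    { apply Rmult_lt_reg_r with (a + 1). lra. rewrite Rmult_assoc, Rinv_l by lra. lra. }
    nra. }
  lra.
Qed.

Lemma WW_odd z : WW (- z) = (RtoC 1 - WW z)%C.
Proof.
  unfold WW, W. rewrite K_odd. unfold BB. rewrite half_C. pose proof two_nz. ceq. field; auto.
Qed.

Lemma WW_lims : filterlim WW (Rbar_locally m_infty) (@locally C_UniformSpace (RtoC 0)) /\
                filterlim WW (Rbar_locally p_infty) (@locally C_UniformSpace (RtoC 1)).
Proof.
  split.
  - apply lim_minf. intros eps He. destruct (WW_pinf_bound eps He) as [M HM].
    exists (- M). intros z Hz.
    replace (WW z) with (WW (- - z)) by (f_equal; ring). rewrite WW_odd.
    replace (RtoC 1 - WW (- z) - RtoC 0)%C with (- (WW (- z) - RtoC 1))%C by (ceq; ring).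
    rewrite Cmod_opp. apply HM. lra.
  - apply lim_pinf. apply WW_pinf_bound.
Qed.
End Final.

Theorem lemma1p2 :
  exists g : C, Im g < 0 /\
  exists W : R -> C,
    solves_ode g W /\
    filterlim W (Rbar_locally m_infty) (locally (RtoC 0)) /\
    filterlim W (Rbar_locally p_infty) (locally (RtoC 1)).
Proof.
  destruct Phi_lim as [L HL].
  exists gg. split. apply Im_gg.
  exists (WW L). split.
  - apply solves. apply dPhi.
  - apply (WW_lims L HL).
Qed.
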